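(* Let $(X,d)$ be a metric space and $\mu\colon X^3\to X$ a ternary operation satisfying: (C0)' there is $\kappa_0$ such that $d(\mu(a_1,a_1,a_2),a_1)\leqslant\kappa_0$ and $d(\mu(a_{\sigma(1)},a_{\sigma(2)},a_{\sigma(3)}),\mu(a_1,a_2,a_3))\leqslant\kappa_0$ for all $a_1,a_2,a_3\in X$ and all permutations $\sigma$; (C1)' there is an affine $\rho\colon[0,\infty)\to[0,\infty)$ with $d(\mu(a,b,c),\mu(a',b,c))\leqslant\rho(d(a,a'))$ for all $a,a',b,c\in X$; (C2)' there is $\kappa_4>0$ with $d(\mu(\mu(a,b,c),b,d),\mu(a,b,\mu(c,b,d)))\leqslant\kappa_4$ for all $a,b,c,d\in X$. Let $\varphi=\psi$ be a formal median identity in $p$ variables. Then there is a constant $R=R(\rho,\kappa_0,\kappa_4,\varphi,\psi)$ such that for all $x_1,\ldots,x_p\in X$, $d(\varphi_X(x_1,\ldots,x_p),\psi_X(x_1,\ldots,x_p))\leqslant R$.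
   Context: Let $\Omega_p=\{\alpha_1,\ldots,\alpha_p\}$ and add two symbols $\langle,\rangle$. The set $\mathfrak M_p$ of formal ternary expressions in $p$ variables is the smallest set of finite words over $\Omega_p\cup\{\langle,\rangle\}$ containing each $\alpha_i$ and containing $\langle\varphi_1\varphi_2\varphi_3\rangle$ whenever $\varphi_1,\varphi_2,\varphi_3$ belong to it; every element not in $\Omega_p$ is uniquely of the form $\langle\varphi_1\varphi_2\varphi_3\rangle$. For a set $Y$ with ternary operation $\nu$ and $y_1,\ldots,y_p\in Y$, the realisation $\varphi_Y(y_1,\ldots,y_p)$ is defined inductively by $(\alpha_i)_Y(y_1,\ldots,y_p)=y_i$ and $\langle\varphi_1\varphi_2\varphi_3\rangle_Y=\nu((\varphi_1)_Y,(\varphi_2)_Y,(\varphi_3)_Y)$ (each evaluated at $(y_1,\ldots,y_p)$). An equation $\varphi=\psi$ with $\varphi,\psi\in\mathfrak M_p$ is a formal median identity if $\varphi_Y(y_1,\ldots,y_p)=\psi_Y(y_1,\ldots,y_p)$ for every median algebra $(Y,\nu)$ and all $y_1,\ldots,y_p\in Y$. (A median algebra is a set with a ternary operation $m$ satisfying $m(a,a,b)=a$, full symmetry, and $m(m(a,b,c),b,d)=m(a,b,m(c,b,d))$.) *)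

(* Defs.v *)
From Stdlib Require Import Reals.
Open Scope R_scope.

(* Formal ternary expressions in p variables alpha_1..alpha_p
   (variables indexed by {i | i < p}); a word <phi1 phi2 phi3> is Node. *)
Inductive texpr (p : nat) : Type :=
  | Var : {i : nat | (i < p)%nat} -> texpr p
  | Node : texpr p -> texpr p -> texpr p -> texpr p.
Arguments Var {p} _.
Arguments Node {p} _ _ _.

Fixpoint realise {p : nat} {Y : Type} (nu : Y -> Y -> Y -> Y)
  (y : {i : nat | (i < p)%nat} -> Y) (e : texpr p) : Y :=
  match e with
  | Var i => y i
  | Node e1 e2 e3 => nu (realise nu y e1) (realise nu y e2) (realise nu y e3)
  end.

Definition median_algebra (Y : Type) (m : Y -> Y -> Y -> Y) : Prop :=
  (forall a b, m a a b = a) /\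
  (forall a b c, m a b c = m a c b /\ m a b c = m b a c /\ m a b c = m b c a /\
                 m a b c = m c a b /\ m a b c = m c b a) /\
  (forall a b c d, m (m a b c) b d = m a b (m c b d)).

Definition formal_median_identity {p : nat} (phi psi : texpr p) : Prop :=
  forall (Y : Type) (m : Y -> Y -> Y -> Y), median_algebra Y m ->
  forall y : {i : nat | (i < p)%nat} -> Y, realise m y phi = realise m y psi.

Definition metric {X : Type} (d : X -> X -> R) : Prop :=
  (forall x y, 0 <= d x y) /\
  (forall x y, d x y = 0 <-> x = y) /\
  (forall x y, d x y = d y x) /\
  (forall x y z, d x z <= d x y + d y z).

Definition C0' {X : Type} (d : X -> X -> R) (mu : X -> X -> X -> X) (k0 : R) : Prop :=
  forall a1 a2 a3,
    d (mu a1 a1 a2) a1 <= k0 /\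
    d (mu a1 a2 a3) (mu a1 a2 a3) <= k0 /\
    d (mu a1 a3 a2) (mu a1 a2 a3) <= k0 /\
    d (mu a2 a1 a3) (mu a1 a2 a3) <= k0 /\
    d (mu a2 a3 a1) (mu a1 a2 a3) <= k0 /\
    d (mu a3 a1 a2) (mu a1 a2 a3) <= k0 /\
    d (mu a3 a2 a1) (mu a1 a2 a3) <= k0.

Definition C1' {X : Type} (d : X -> X -> R) (mu : X -> X -> X -> X) (rho : R -> R) : Prop :=
  forall a a' b c, d (mu a b c) (mu a' b c) <= rho (d a a').

Definition C2' {X : Type} (d : X -> X -> R) (mu : X -> X -> X -> X) (k4 : R) : Prop :=
  forall a b c e, d (mu (mu a b c) b e) (mu a b (mu c b e)) <= k4.

(* Main.v *)
Require Import Defs.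
From Stdlib Require Import Reals Lra.
From Stdlib Require Import FunctionalExtensionality PropExtensionality ProofIrrelevance ClassicalEpsilon.
Open Scope R_scope.

Inductive eqv {p : nat} : texpr p -> texpr p -> Prop :=
| e_refl t : eqv t t
| e_sym t s : eqv t s -> eqv s t
| e_trans t s u : eqv t s -> eqv s u -> eqv t u
| e_cong1 a a' b c : eqv a a' -> eqv (Node a b c) (Node a' b c)
| e_idem a b : eqv (Node a a b) a
| e_sw23 a b c : eqv (Node a b c) (Node a c b)
| e_sw12 a b c : eqv (Node a b c) (Node b a c)
| e_assoc a b c e : eqv (Node (Node a b c) b e) (Node a b (Node c b e)).

Lemma e_cong2 {p} (a b b' c : texpr p) : eqv b b' -> eqv (Node a b c) (Node a b' c).
Proof.
  intro H. eapply e_trans. apply e_sw12. eapply e_trans. apply e_cong1, H. apply e_sw12.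
Qed.

Lemma e_cong3 {p} (a b c c' : texpr p) : eqv c c' -> eqv (Node a b c) (Node a b c').
Proof.
  intro H. eapply e_trans. apply e_sw23. eapply e_trans. apply e_cong2, H. apply e_sw23.
Qed.

Section Q.
Variable p : nat.

Definition cls (t : texpr p) : texpr p -> Prop := eqv t.

Lemma cls_eq t s : eqv t s -> cls t = cls s.
Proof.
  intro H. unfold cls. apply functional_extensionality. intro u.
  apply propositional_extensionality. split; intro K.
  - eapply e_trans. apply e_sym, H. exact K.
  - eapply e_trans. apply H. exact K.
Qed.

Lemma cls_inv t s : cls t = cls s -> eqv t s.
Proof.
  intro H. assert (K : cls s s) by apply e_refl. rewrite <- H in K. exact K.
Qed.

Definition Y := {P : texpr p -> Prop | exists t, P = cls t}.
Definition mk (t : texpr p) : Y := exist _ (cls t) (ex_intro _ t eq_refl).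
Definition rep (y : Y) : texpr p :=
  proj1_sig (constructive_indefinite_description _ (proj2_sig y)).
Lemma rep_spec y : proj1_sig y = cls (rep y).
Proof. unfold rep. destruct constructive_indefinite_description. simpl. exact e. Qed.

Lemma Y_ext (y1 y2 : Y) : proj1_sig y1 = proj1_sig y2 -> y1 = y2.
Proof.
  destruct y1 as [P1 H1], y2 as [P2 H2]; simpl. intro E. subst.
  f_equal. apply proof_irrelevance.
Qed.

Lemma mk_rep y : mk (rep y) = y.
Proof. apply Y_ext. simpl. symmetry. apply rep_spec. Qed.

Lemma rep_mk t : eqv (rep (mk t)) t.
Proof. apply e_sym, cls_inv. exact (rep_spec (mk t)). Qed.

Lemma mk_eq t s : eqv t s -> mk t = mk s.
Proof. intro H. apply Y_ext. simpl. apply cls_eq, H. Qed.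

Definition mY (a b c : Y) : Y := mk (Node (rep a) (rep b) (rep c)).

Lemma mY_median : median_algebra Y mY.
Proof.
  unfold mY. split; [|split].
  - intros a b. rewrite <- (mk_rep a) at 3. apply mk_eq, e_idem.
  - intros a b c. repeat split; apply mk_eq.
    + apply e_sw23.
    + apply e_sw12.
    + eapply e_trans. apply e_sw12. apply e_sw23.
    + eapply e_trans. apply e_sw23. apply e_sw12.
    + eapply e_trans. apply e_sw12. eapply e_trans. apply e_sw23. apply e_sw12.
  - intros a b c d. apply mk_eq.
    eapply e_trans. apply e_cong1, rep_mk.
    eapply e_trans. apply e_assoc.
    apply e_cong3, e_sym, rep_mk.
Qed.

Lemma realise_mk (e : texpr p) : realise mY (fun i => mk (Var i)) e = mk e.
Proof.
  induction e; simpl.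
  - reflexivity.
  - rewrite IHe1, IHe2, IHe3. unfold mY. apply mk_eq.
    eapply e_trans. apply e_cong1, rep_mk.
    eapply e_trans. apply e_cong2, rep_mk. apply e_cong3, rep_mk.
Qed.

Lemma fmi_eqv (phi psi : texpr p) : formal_median_identity phi psi -> eqv phi psi.
Proof.
  intro H. specialize (H Y mY mY_median (fun i => mk (Var i))).
  rewrite !realise_mk in H. apply cls_inv. exact (f_equal (@proj1_sig _ _) H).
Qed.
End Q.

Lemma eqv_bound (alpha beta k0 k4 : R) (p : nat) (t s : texpr p) :
  0 <= alpha -> eqv t s ->
  exists B : R,
    forall (X : Type) (d : X -> X -> R) (mu : X -> X -> X -> X),
      metric d -> C0' d mu k0 -> C1' d mu (fun t => alpha * t + beta) -> C2' d mu k4 ->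
      forall x : {i : nat | (i < p)%nat} -> X,
        d (realise mu x t) (realise mu x s) <= B.
Proof.
  intros Ha H. induction H as [| ? ? ? IHeqv | t0 s0 u0 ? IHeqv1 ? IHeqv2 | ? ? ? ? ? IHeqv | | | |].
  - exists 0. intros X d mu [Hd0 [Hd1 [Hd2 Hd3]]] _ _ _ x.
    rewrite (proj2 (Hd1 _ _) eq_refl). lra.
  - destruct IHeqv as [B HB]. exists B. intros X d mu Hm G0 G1 G2 x.
    pose proof (HB X d mu Hm G0 G1 G2 x).
    destruct Hm as [Hd0 [Hd1 [Hd2 Hd3]]]. rewrite Hd2. assumption.
  - destruct IHeqv1 as [B1 HB1], IHeqv2 as [B2 HB2]. exists (B1 + B2).
    intros X d mu Hm G0 G1 G2 x.
    pose proof (HB1 X d mu Hm G0 G1 G2 x). pose proof (HB2 X d mu Hm G0 G1 G2 x).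
    destruct Hm as [Hd0 [Hd1 [Hd2 Hd3]]].
    eapply Rle_trans. apply (Hd3 _ (realise mu x s0)). lra.
  - destruct IHeqv as [B HB]. exists (alpha * B + beta).
    intros X d mu Hm G0 G1 G2 x. simpl.
    pose proof (HB X d mu Hm G0 G1 G2 x).
    eapply Rle_trans. apply G1.
    apply Rplus_le_compat_r. apply Rmult_le_compat_l; auto.
  - exists k0. intros X d mu Hm G0 G1 G2 x. simpl. exact (proj1 (G0 _ (realise mu x b) (realise mu x b))).
  - exists k0. intros X d mu Hm G0 G1 G2 x. simpl.
    destruct Hm as [Hd0 [Hd1 [Hd2 Hd3]]]. rewrite Hd2. exact (proj1 (proj2 (proj2 (G0 _ _ _)))).
  - exists k0. intros X d mu Hm G0 G1 G2 x. simpl.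
    destruct Hm as [Hd0 [Hd1 [Hd2 Hd3]]]. rewrite Hd2. exact (proj1 (proj2 (proj2 (proj2 (G0 _ _ _))))).
  - exists k4. intros X d mu Hm G0 G1 G2 x. simpl. apply G2.
Qed.

Theorem proposition3p11 :
  forall (alpha beta k0 k4 : R) (p : nat) (phi psi : texpr p),
    (* rho(t) = alpha t + beta is an affine map [0,oo) -> [0,oo) *)
    0 <= alpha -> 0 <= beta -> 0 < k4 ->
    formal_median_identity phi psi ->
    exists Rc : R,
      forall (X : Type) (d : X -> X -> R) (mu : X -> X -> X -> X),
        metric d ->
        C0' d mu k0 ->
        C1' d mu (fun t => alpha * t + beta) ->
        C2' d mu k4 ->
        forall x : {i : nat | (i < p)%nat} -> X,
          d (realise mu x phi) (realise mu x psi) <= Rc.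
Proof.
  intros alpha beta k0 k4 p phi psi Ha Hb Hk H.
  apply (eqv_bound alpha beta k0 k4 p phi psi Ha). apply fmi_eqv, H.
Qed.
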